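(* Let $(\Omega(\mathcal{A}),\mathrm{d},\bar{\mathrm{d}})$ be a bidifferential graded algebra, and let $M,N,m\ge1$. Let $X$ ($N\times N$, invertible), $Y$ ($M\times N$), $P$, $R$ ($N\times N$) and $Q$ ($N\times M$) be matrices over $\mathcal{A}$ with $\mathrm{d}R=0$, $\mathrm{d}Q=0$, $\bar{\mathrm{d}}X=(\mathrm{d}X)P$, $\bar{\mathrm{d}}Y=(\mathrm{d}Y)P$ and $RX+QY=XP$, and put $\Phi=YX^{-1}$. Let $\Delta$ be an $m\times m$ matrix over $\mathcal{A}$ with $\bar{\mathrm{d}}\Delta=(\mathrm{d}\Delta)\Delta$, let $\mathcal{C}$ be an $m\times N$ matrix over $\mathcal{A}$ with $\mathrm{d}\mathcal{C}=0$, and let $G$ be an $m\times N$ matrix over $\mathcal{A}$ such that $$\bar{\mathrm{d}}(GX)=\mathrm{d}(GX)\,P,\qquad (GX)P-\Delta(GX)=\mathcal{C}X .$$ Then $\bar{\mathrm{d}}G+G\,Q\,\mathrm{d}\Phi=\mathrm{d}(\Delta G)$. Moreover, suppose $Q=VU^T$ with $U$ an $M\times m$ and $V$ an $N\times m$ matrix over $\mathcal{A}$ satisfying $\mathrm{d}U=\bar{\mathrm{d}}U=\mathrm{d}V=\bar{\mathrm{d}}V=0$, and suppose $GV$ is invertible. Then $g:=(GV)^{-1}$ satisfies $$\bar{\mathrm{d}}g^{-1}+g^{-1}\,\mathrm{d}\phi'=\mathrm{d}(\Delta g^{-1})\quad\text{with }\phi'=U^T\Phi V,$$ and consequently $\m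athrm{d}\big([\bar{\mathrm{d}}g-(\mathrm{d}g)\Delta]\,g^{-1}\big)=0$.
   Context: $\mathcal{A}$ is a unital associative algebra over $\mathbb{C}$ with identity $I$. A bidifferential graded algebra $(\Omega(\mathcal{A}),\mathrm{d},\bar{\mathrm{d}})$ consists of a graded associative algebra $\Omega(\mathcal{A})=\bigoplus_{r\ge 0}\Omega^r(\mathcal{A})$ with $\Omega^0(\mathcal{A})=\mathcal{A}$ (each $\Omega^r(\mathcal{A})$ an $\mathcal{A}$-bimodule) together with two linear maps $\mathrm{d},\bar{\mathrm{d}}:\Omega^r(\mathcal{A})\to\Omega^{r+1}(\mathcal{A})$ satisfying the graded Leibniz rule $\mathrm{d}(\alpha\beta)=(\mathrm{d}\alpha)\beta+(-1)^r\alpha\,\mathrm{d}\beta$ for $\alpha\in\Omega^r(\mathcal{A})$ (and likewise for $\bar{\mathrm{d}}$), and $\mathrm{d}^2=\bar{\mathrm{d}}^2=0$, $\mathrm{d}\bar{\mathrm{d}}+\bar{\mathrm{d}}\mathrm{d}=0$. The maps $\mathrm{d},\bar{\mathrm{d}}$ are applied entrywise to matrices with entries in $\Omega(\mathcal{A})$, and products of such matrices use the matrix product together with the product of $\Omega(\mathcal{A})$. $U^T$ denotes the transpose. *)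

(* Defs.v *)
From HB Require Import structures.
From mathcomp Require Import all_boot all_order all_algebra.
Set Implicit Arguments. Unset Strict Implicit. Unset Printing Implicit Defensive.
Import GRing.Theory.
Local Open Scope ring_scope.

(* A graded associative K-algebra  Omega = (+)_{r>=0} Og r  realised internally:
   Omega is a (unital, associative, not nec. commutative) K-algebra and
   Og r is the homogeneous component of degree r.  Og 0 is the algebra A. *)
Definition graded_algebra (K : fieldType) (Omega : algType K)
    (Og : nat -> {pred Omega}) : Prop :=
  (forall r, 0 \in Og r) /\
  (forall r x y, x \in Og r -> y \in Og r -> x + y \in Og r) /\
  (forall r (a : K) x, x \in Og r -> a *: x \in Og r) /\
  1 \in Og 0%N /\
      (forall r s x y, x \in Og r -> y \in Og s -> x * y \in Og (r + s)%N) /\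
      (forall x, exists n (xs : 'I_n -> Omega),
          (forall i, xs i \in Og i) /\ x = \sum_(i < n) xs i) /\
      (forall n (xs : 'I_n -> Omega),
          (forall i, xs i \in Og i) -> \sum_(i < n) xs i = 0 ->
          forall i, xs i = 0).

Definition graded_derivation (K : fieldType) (Omega : algType K)
    (Og : nat -> {pred Omega}) (d : {linear Omega -> Omega}) : Prop :=
  (forall r x, x \in Og r -> d x \in Og r.+1) /\
  (forall r x y, x \in Og r -> d (x * y) = d x * y + (-1) ^+ r * x * d y).

Definition bidiff_graded_algebra (K : fieldType) (Omega : algType K)
    (Og : nat -> {pred Omega}) (d dbar : {linear Omega -> Omega}) : Prop :=
  graded_algebra Og /\ graded_derivation Og d /\ graded_derivation Og dbar /\
  (forall x, d (d x) = 0) /\ (forall x, dbar (dbar x) = 0) /\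
  (forall x, d (dbar x) + dbar (d x) = 0).

Definition mx_over (K : fieldType) (Omega : algType K)
    (Og : nat -> {pred Omega}) p q (Mx : 'M[Omega]_(p, q)) : Prop :=
  forall i j, Mx i j \in Og 0%N.

(* Main.v *)
Require Import Defs.
From HB Require Import structures.
From mathcomp Require Import all_boot all_order all_algebra.
Import GRing.Theory.
Local Open Scope ring_scope.


Section H.
Variables (K : fieldType) (Omega : algType K) (Og : nat -> {pred Omega}).
Hypothesis O0 : forall r, 0 \in Og r.
Hypothesis Oadd : forall r x y, x \in Og r -> y \in Og r -> x + y \in Og r.
Hypothesis O1 : 1 \in Og 0%N.
Hypothesis Omul : forall r s x y, x \in Og r -> y \in Og s -> x * y \in Og (r + s)%N.

Lemma mxo_mul p q r (A : 'M[Omega]_(p,q)) (B : 'M[Omega]_(q,r)) :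
  mx_over Og A -> mx_over Og B -> mx_over Og (A *m B).
Proof.
move=> hA hB i j; rewrite mxE.
apply: (big_ind (fun x => x \in Og 0%N)) => //; first exact: Oadd.
by move=> k _; apply: (Omul 0 0).
Qed.

Lemma mxo_tr p q (A : 'M[Omega]_(p,q)) : mx_over Og A -> mx_over Og A^T.
Proof. by move=> hA i j; rewrite mxE. Qed.

Lemma dmul (D : {linear Omega -> Omega}) : graded_derivation Og D ->
  forall p q r (A : 'M[Omega]_(p,q)) (B : 'M[Omega]_(q,r)), mx_over Og A ->
  map_mx D (A *m B) = map_mx D A *m B + A *m map_mx D B.
Proof.
move=> [_ hL] p q r A B hA; apply/matrixP => i j.
rewrite !mxE raddf_sum -big_split; apply: eq_bigr => k _.
rewrite !mxE; have := hL 0%N (A i k) (B k j) (hA i k); rewrite expr0 mul1r => h; exact: h.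
Qed.

Lemma D1 (D : {linear Omega -> Omega}) : graded_derivation Og D -> D 1 = 0.
Proof.
move=> [_ hL]; have := hL 0%N 1 1 O1; rewrite expr0 !mul1r mulr1 => h.
by apply: (@addrI _ (D 1)); rewrite addr0 -h.
Qed.
Lemma map1 (D : {linear Omega -> Omega}) n : graded_derivation Og D ->
  map_mx D (1%:M : 'M[Omega]_n) = 0.
Proof.
move=> hD; apply/matrixP => i j; rewrite !mxE.
by case: (i == j); rewrite ?D1 // raddf0.
Qed.

Lemma mxo1 n : mx_over Og (1%:M : 'M[Omega]_n).
Proof. by move=> i j; rewrite mxE; case: (i == j). Qed.
End H.

Lemma ddmx (K : fieldType) (Omega : algType K) (D : {linear Omega -> Omega})
  (hdd : forall x, D (D x) = 0) p q (A : 'M[Omega]_(p,q)) :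
  map_mx D (map_mx D A) = 0.
Proof. by apply/matrixP => i j; rewrite !mxE hdd. Qed.


Theorem mainTheorem7 (K : fieldType) (Omega : algType K)
    (Og : nat -> {pred Omega}) (d dbar : {linear Omega -> Omega})
    (M N m : nat)
    (X : 'M[Omega]_N) (Xi : 'M[Omega]_N) (Y : 'M[Omega]_(M, N))
    (P R : 'M[Omega]_N) (Q : 'M[Omega]_(N, M))
    (Delta : 'M[Omega]_m) (C : 'M[Omega]_(m, N)) (G : 'M[Omega]_(m, N)) :
  bidiff_graded_algebra Og d dbar ->
  (0 < M)%N -> (0 < N)%N -> (0 < m)%N ->
  mx_over Og X -> mx_over Og Xi -> mx_over Og Y -> mx_over Og P ->
  mx_over Og R -> mx_over Og Q -> mx_over Og Delta -> mx_over Og C ->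
  mx_over Og G ->
  (* Xi is the inverse of X *)
  X *m Xi = 1%:M -> Xi *m X = 1%:M ->
  map_mx d R = 0 -> map_mx d Q = 0 ->
  map_mx dbar X = map_mx d X *m P ->
  map_mx dbar Y = map_mx d Y *m P ->
  R *m X + Q *m Y = X *m P ->
  map_mx dbar Delta = map_mx d Delta *m Delta ->
  map_mx d C = 0 ->
  map_mx dbar (G *m X) = map_mx d (G *m X) *m P ->
  (G *m X) *m P - Delta *m (G *m X) = C *m X ->
  let Phi := Y *m Xi in
  map_mx dbar G + G *m Q *m map_mx d Phi = map_mx d (Delta *m G) /\
  (forall (U : 'M[Omega]_(M, m)) (V : 'M[Omega]_(N, m)) (g : 'M[Omega]_m),
     mx_over Og U -> mx_over Og V -> mx_over Og g ->
     Q = V *m U^T ->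
     map_mx d U = 0 -> map_mx dbar U = 0 ->
     map_mx d V = 0 -> map_mx dbar V = 0 ->
     (* g is the inverse of G V, i.e. g^{-1} = G V *)
     g *m (G *m V) = 1%:M -> (G *m V) *m g = 1%:M ->
     let phi' := U^T *m Phi *m V in
     map_mx dbar (G *m V) + (G *m V) *m map_mx d phi'
       = map_mx d (Delta *m (G *m V)) /\
     map_mx d ((map_mx dbar g - map_mx d g *m Delta) *m (G *m V)) = 0).
Proof.
move=> [[O0 [Oadd [_ [O1 [Omul _]]]]] [hd [hdb [hdd [_ _]]]]] _ _ _.
move=> oX oXi oY oP oR oQ oD oC oG XXi XiX dR dQ dbX dbY HRQ dbD dC dbW HC.
cbv zeta.
have mo := @mxo_mul _ _ Og O0 Oadd Omul.
have dM := @dmul _ _ Og d hd.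
have bM := @dmul _ _ Og dbar hdb.
have tr := @mxo_tr _ _ Og.
have oPhi : mx_over Og (Y *m Xi) := mo _ _ _ _ _ oY oXi.
have hB : map_mx dbar G *m X = map_mx d G *m X *m P.
  have e1 := bM _ _ _ G X oG; have e2 := dM _ _ _ G X oG.
  rewrite dbW e2 dbX mulmxDl [G *m (_ *m P)]mulmxA in e1.
  exact: (esym (addIr _ e1)).
have hXP : X *m P *m Xi = R + Q *m (Y *m Xi).
  by rewrite -HRQ mulmxDl -!mulmxA XXi mulmx1.
have hbG : map_mx dbar G = map_mx d G *m (R + Q *m (Y *m Xi)).
  by rewrite -hXP !mulmxA -hB -mulmxA XXi mulmx1.
have hC2 : G *m (R + Q *m (Y *m Xi)) - Delta *m G = C.
  have := congr1 (mulmx^~ Xi) HC; rewrite /= mulmxBl -!mulmxA XXi !mulmx1.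
  by rewrite -hXP -!mulmxA.
have p1 : map_mx dbar G + G *m Q *m map_mx d (Y *m Xi) = map_mx d (Delta *m G).
  have := congr1 (map_mx d) hC2.
  rewrite map_mxB dC (dM _ _ _ _ _ oG) map_mxD dR add0r (dM _ _ _ _ _ oQ) dQ mul0mx add0r -hbG.
  by move=> h; apply/eqP; rewrite -subr_eq0 -mulmxA; apply/eqP.
split; first exact: p1.
move=> U V g oU oV og HQ dU dbU dV dbV gF Fg.
have oF : mx_over Og (G *m V) := mo _ _ _ _ _ oG oV.
have h2a : map_mx dbar (G *m V) + (G *m V) *m map_mx d (U^T *m (Y *m Xi) *m V)
       = map_mx d (Delta *m (G *m V)).
  rewrite (bM _ _ _ _ _ oG) dbV mulmx0 addr0.
  rewrite (dM _ _ _ _ _ (mo _ _ _ _ _ (tr _ _ _ oU) oPhi)) dV mulmx0 addr0.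
  rewrite (dM _ _ _ _ _ (tr _ _ _ oU)) -map_trmx dU trmx0 mul0mx add0r.
  rewrite [Delta *m (G *m V)]mulmxA (dM _ _ _ _ _ (mo _ _ _ _ _ oD oG)) dV mulmx0 addr0.
  by rewrite -p1 mulmxDl HQ -!mulmxA.
split; first exact: h2a.
have e : (map_mx dbar g - map_mx d g *m Delta) *m (G *m V)
   = map_mx d (U^T *m (Y *m Xi) *m V) - map_mx d (g *m (Delta *m (G *m V))).
  have e3 := bM _ _ _ g (G *m V) og.
  rewrite gF (@map1 _ _ Og O1 _ _ hdb) in e3.
  move/esym/eqP: e3; rewrite addr_eq0 => /eqP e3.
  have h2b : map_mx dbar (G *m V) = map_mx d (Delta *m (G *m V))
      - (G *m V) *m map_mx d (U^T *m (Y *m Xi) *m V) by rewrite -h2a addrK.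
  rewrite (dM _ _ _ _ _ og) mulmxBl e3 h2b mulmxBr [g *m (G *m V *m _)]mulmxA gF mul1mx.
  rewrite [map_mx d g *m (Delta *m _)]mulmxA.
  by rewrite opprB opprD addrA addrAC.
by rewrite e map_mxB !(ddmx _ _ _ hdd) subrr.
Qed.
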